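(* Let $Q=(q_n)_{n\ge1}$ be a basic sequence that is infinite in limit, and let $F\in\Gamma_Q$. Then there exists a sequence $F_1,F_2,F_3,\dots$ of elements of $\Gamma_Q$ such that $F_n\ne F$ for all $n$ and $\lim_{n\to\infty}d(F,F_n)=0$.
   Context: A basic sequence is a sequence $Q=(q_n)_{n\ge1}$ of integers with $q_n\ge 2$; it is infinite in limit if $q_n\to\infty$. $\mathbb{N}$ denotes the positive integers. For each positive integer $j$ let $\nu_j=\min\{N : q_m\ge 2j^2 \text{ for all } m\ge N\}$. Define $l_1=\max(\nu_2-1,1)$ and, recursively for $i\ge 2$, $l_i=\max\big(\min\{k\in\mathbb{N} : l_1+2l_2+\cdots+(i-1)l_{i-1}+ik\ge \nu_{i+1}-1\},1\big)$. Put $L_i=\sum_{j=1}^i jl_j$ (with $L_0=0$). Let $S_Q=\{(a,b,c)\in\mathbb{N}^3 : b\le l_a,\ c\le a\}$ and $\phi_Q(a,b,c)=L_{a-1}+(b-1)a+c$; $\phi_Q$ is a bijection $S_Q\to\mathbb{N}$. A $Q$-special sequence is a family of integers $F=(F_{(a,b,c)})_{(a,b,c)\in S_Q}$ with $F_{(a,b,1)}=0$ for all $(a,b,1)\in S_Q$ and $\frac{F_{(a,b,c)}}{q_{\phi_Q(a,b,c)}}\in\left[\frac{c-1}{a}-\frac{1}{2a^2},\frac{c-1}{a}+\frac{1}{2a^2}\right]$ for $(a,b,c)\in S_Q$ with $c>1$. Let $\Gamma_Q$ be the set of $Q$-special sequences, and for $F\in\Gamma_Q$ put $E_{F,n}=F_{\phi_Q^{-1}(n)}$.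 For $F_1\ne F_2$ in $\Gamma_Q$ let $\zeta_{F_1,F_2}=\min\{n : E_{F_1,n}\ne E_{F_2,n}\}$ and define $d(F_1,F_2)=\frac{1}{q_1q_2\cdots q_{\zeta_{F_1,F_2}-1}}$ (empty product equal to $1$); set $d(F,F)=0$. *)

(* Defs.v *)
From Stdlib Require Import Reals Lra Lia ZArith Arith Classical ClassicalEpsilon.
Open Scope R_scope.

(* A sequence Q = (q_n)_{n>=1} is modelled as q : nat -> nat; the value q 0 is ignored. *)
Definition basic_sequence (q : nat -> nat) : Prop :=
  forall n : nat, (1 <= n)%nat -> (2 <= q n)%nat.

Definition infinite_in_limit (q : nat -> nat) : Prop :=
  forall M : nat, exists N : nat, forall n : nat, (N <= n)%nat -> (M <= q n)%nat.

(* least n with P n (arbitrary if no such n exists) *)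
Definition least (P : nat -> Prop) : nat :=
  epsilon (inhabits 0%nat) (fun n => P n /\ forall m, P m -> (n <= m)%nat).

Definition nu (q : nat -> nat) (j : nat) : nat :=
  least (fun N => (1 <= N)%nat /\
                  forall m : nat, (N <= m)%nat -> (2 * j * j <= q m)%nat).

(* lstep q p Lp = l_{p+1}, given Lp = L_p *)
Definition lstep (q : nat -> nat) (p Lp : nat) : nat :=
  match p with
  | O => Nat.max (nu q 2 - 1) 1
  | S _ => Nat.max
             (least (fun k => (1 <= k)%nat /\
                       (nu q (p + 2) - 1 <= Lp + (p + 1) * k)%nat)) 1
  end.

Fixpoint Lsum (q : nat -> nat) (i : nat) : nat :=
  match i with
  | O => O
  | S p => (Lsum q p + S p * lstep q p (Lsum q p))%nat
  end.

(* l_i for i >= 1 *)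
Definition lseq (q : nat -> nat) (i : nat) : nat :=
  lstep q (i - 1) (Lsum q (i - 1)).

Definition inSQ (q : nat -> nat) (t : nat * nat * nat) : Prop :=
  match t with
  | (a, b, c) => (1 <= a)%nat /\ (1 <= b)%nat /\ (1 <= c)%nat /\
                 (b <= lseq q a)%nat /\ (c <= a)%nat
  end.

Definition SQ (q : nat -> nat) : Type := { t : nat * nat * nat | inSQ q t }.

Definition phiQ (q : nat -> nat) (t : nat * nat * nat) : nat :=
  match t with
  | (a, b, c) => (Lsum q (a - 1) + (b - 1) * a + c)%nat
  end.

Definition special (q : nat -> nat) (F : SQ q -> Z) : Prop :=
  forall s : SQ q,
    match proj1_sig s with
    | (a, b, c) =>
        (c = 1%nat -> F s = 0%Z) /\
        ((1 < c)%nat ->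
           (INR (c - 1) / INR a - 1 / (2 * INR a ^ 2)
              <= IZR (F s) / INR (q (phiQ q (a, b, c))))
           /\ IZR (F s) / INR (q (phiQ q (a, b, c)))
              <= INR (c - 1) / INR a + 1 / (2 * INR a ^ 2))
    end.

(* E_{F,n} = F_{phi^{-1}(n)}; zeta = min { n : E_{F1,n} <> E_{F2,n} } *)
Definition zeta (q : nat -> nat) (F1 F2 : SQ q -> Z) : nat :=
  least (fun n => exists s : SQ q, phiQ q (proj1_sig s) = n /\ F1 s <> F2 s).

Fixpoint prodq (q : nat -> nat) (n : nat) : nat :=
  match n with
  | O => 1%nat
  | S p => (prodq q p * q (S p))%nat
  end.

Definition dQ (q : nat -> nat) (F1 F2 : SQ q -> Z) : R :=
  if excluded_middle_informative (F1 = F2) then 0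
  else 1 / INR (prodq q (zeta q F1 F2 - 1)).

(* Main.v *)
Require Import Defs.
From Stdlib Require Import Reals ZArith.
From Stdlib Require Import Bool Lra Lia Arith Wf_nat Classical ClassicalEpsilon FunctionalExtensionality.
Open Scope R_scope.

Lemma least_spec (P : nat -> Prop) : (exists n, P n) ->
  P (least P) /\ forall m, P m -> (least P <= m)%nat.
Proof.
  intros H.
  destruct (dec_inh_nat_subset_has_unique_least_element P (fun n => classic (P n)) H)
    as [x [[Hx1 Hx2] _]].
  unfold least. apply (epsilon_spec (inhabits 0%nat) (fun n => P n /\ forall m, P m -> (n <= m)%nat)).
  exists x; auto.
Qed.

Lemma nu_spec q j : infinite_in_limit q ->
  (1 <= nu q j)%nat /\ forall m, (nu q j <= m)%nat -> (2 * j * j <= q m)%nat.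
Proof.
  intros Hinf. unfold nu.
  destruct (Hinf (2*j*j)%nat) as [N HN].
  apply (least_spec (fun N => (1 <= N)%nat /\ forall m : nat, (N <= m)%nat -> (2 * j * j <= q m)%nat)).
  exists (Nat.max N 1). split; [lia|]. intros m Hm. apply HN. lia.
Qed.

Lemma lstep_ge1 q p L : (1 <= lstep q p L)%nat.
Proof. destruct p; simpl; apply Nat.le_max_r. Qed.

Lemma Lsum_nu q p : infinite_in_limit q -> (nu q (p+2) - 1 <= Lsum q (S p))%nat.
Proof.
  intros Hinf. simpl Lsum. destruct p as [|p'].
  - simpl. lia.
  - set (p := S p').
    unfold lstep; fold p.
    destruct (least_spec (fun k => (1 <= k)%nat /\
                       (nu q (p + 2) - 1 <= Lsum q p + (p + 1) * k)%nat)) as [[H1 H2] _].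
    { exists (Nat.max (nu q (p+2)) 1). split; [lia|].
      assert (nu q (p+2) <= Nat.max (nu q (p+2)) 1)%nat by lia.
      assert (Nat.max (nu q (p+2)) 1 <= (p+1) * Nat.max (nu q (p+2)) 1)%nat by nia. lia. }
    set (k := least _) in *.
    assert ((p+1)*k <= S p * Nat.max k 1)%nat.
    { replace (S p) with (p+1)%nat by lia. apply Nat.mul_le_mono_l. lia. }
    change (nu q (p + 2) - 1 <= Lsum q p + (Nat.max k 1 + p * Nat.max k 1))%nat. lia.
Qed.

Lemma Lsum_ge q p : (p <= Lsum q p)%nat.
Proof.
  induction p; simpl; [lia|]. pose proof (lstep_ge1 q p (Lsum q p)). nia.
Qed.

Lemma prodq_ge q k : basic_sequence q -> (k + 1 <= prodq q k)%nat.
Proof.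
  intros Hb. induction k; simpl; [lia|].
  pose proof (Hb (S k) ltac:(lia)). nia.
Qed.

Definition tn (n : nat) : nat * nat * nat := (n+2, 1, 2)%nat.

Lemma tn_in q n : inSQ q (tn n).
Proof.
  unfold tn, inSQ. pose proof (lstep_ge1 q (n+2-1) (Lsum q (n+2-1))).
  unfold lseq. repeat split; lia.
Qed.

Definition sn q n : SQ q := exist _ (tn n) (tn_in q n).

Definition vn q (F : SQ q -> Z) n : Z :=
  let x0 := F (sn q n) in
  let Q := INR (q (phiQ q (tn n))) in
  if Rle_dec (IZR (x0+1) / Q) (INR (2-1) / INR (n+2) + 1 / (2 * INR (n+2) ^ 2))
  then (x0+1)%Z else (x0-1)%Z.

Definition eqb3 n (t : nat * nat * nat) : bool :=
  match t with (a,b,c) => Nat.eqb a (n+2) && Nat.eqb b 1 && Nat.eqb c 2 end.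

Definition Fs q (F : SQ q -> Z) n (s : SQ q) : Z :=
  if eqb3 n (proj1_sig s) then vn q F n else F s.

Lemma eqb3_true n t : eqb3 n t = true -> t = tn n.
Proof.
  destruct t as [[a b] c]; simpl. intros H.
  apply andb_true_iff in H as [H H3]. apply andb_true_iff in H as [H1 H2].
  apply Nat.eqb_eq in H1, H2, H3. subst. reflexivity.
Qed.

Lemma pos_big q n : infinite_in_limit q ->
  (2 * (n+2) * (n+2) <= q (phiQ q (tn n)))%nat.
Proof.
  intros Hinf. destruct (nu_spec q (n+2) Hinf) as [H1 H2]. apply H2.
  unfold tn, phiQ. replace (n+2-1)%nat with (S n) by lia.
  pose proof (Lsum_nu q n Hinf). lia.
Qed.

Lemma vn_ok q F n : infinite_in_limit q -> special q F ->
  (INR (2 - 1) / INR (n+2) - 1 / (2 * INR (n+2) ^ 2)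
     <= IZR (vn q F n) / INR (q (phiQ q (tn n))))
  /\ IZR (vn q F n) / INR (q (phiQ q (tn n)))
     <= INR (2 - 1) / INR (n+2) + 1 / (2 * INR (n+2) ^ 2).
Proof.
  intros Hinf HF.
  pose proof (HF (sn q n)) as H.
  change ((2%nat = 1%nat -> F (sn q n) = 0%Z) /\ ((1 < 2)%nat ->
           (INR (2 - 1) / INR (n+2) - 1 / (2 * INR (n+2) ^ 2)
              <= IZR (F (sn q n)) / INR (q (phiQ q (tn n))))
           /\ IZR (F (sn q n)) / INR (q (phiQ q (tn n)))
              <= INR (2 - 1) / INR (n+2) + 1 / (2 * INR (n+2) ^ 2))) in H.
  destruct H as [_ H].
  specialize (H ltac:(lia)).
  pose proof (pos_big q n Hinf) as HQ.
  unfold vn. set (x0 := F (sn q n)) in *.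
  unfold tn in *.
  set (Q := INR (q (phiQ q (n+2,1,2)%nat))) in *.
  set (lo := INR (2 - 1) / INR (n+2) - 1 / (2 * INR (n+2) ^ 2)) in *.
  set (hi := INR (2 - 1) / INR (n+2) + 1 / (2 * INR (n+2) ^ 2)) in *.
  set (h := 1 / (2 * INR (n+2) ^ 2)) in *.
  assert (Hhl : hi - lo = 2 * h) by (unfold hi, lo; ring).
  assert (HQ' : 2 * INR (n+2) ^ 2 <= Q).
  { unfold Q. apply le_INR in HQ. rewrite !mult_INR in HQ. simpl. simpl in HQ. lra. }
  assert (Hpos : 0 < 2 * INR (n+2) ^ 2).
  { assert (0 < INR (n+2)) by (apply lt_0_INR; lia). nra. }
  assert (Hd : 1 / Q <= h).
  { unfold h, Rdiv. rewrite !Rmult_1_l. apply Rinv_le_contravar; lra. }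
  assert (Hd0 : 0 < 1 / Q).
  { unfold Rdiv. rewrite Rmult_1_l. apply Rinv_0_lt_compat. lra. }
  assert (E1 : IZR (x0 + 1) / Q = IZR x0 / Q + 1 / Q).
  { rewrite plus_IZR. field. lra. }
  assert (E2 : IZR (x0 - 1) / Q = IZR x0 / Q - 1 / Q).
  { rewrite minus_IZR. field. lra. }
  destruct (Rle_dec (IZR (x0 + 1) / Q) hi) as [Hle|Hgt].
  - rewrite E1 in *. lra.
  - rewrite E1 in Hgt. rewrite E2. lra.
Qed.

Theorem mainTheorem19 (q : nat -> nat)
  (Hbasic : basic_sequence q) (Hinf : infinite_in_limit q)
  (F : SQ q -> Z) (HF : special q F) :
  exists Fs : nat -> (SQ q -> Z),
    (forall n : nat, special q (Fs n)) /\
    (forall n : nat, Fs n <> F) /\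
    Un_cv (fun n => dQ q F (Fs n)) 0.
Proof.
  assert (Hneq : forall n, Fs q F n <> F).
  { intros n E. assert (E' := f_equal (fun G => G (sn q n)) E). simpl in E'.
    unfold Fs in E'. simpl in E'. rewrite !Nat.eqb_refl in E'. simpl in E'.
    revert E'. unfold vn. destruct Rle_dec; lia. }
  exists (Fs q F). split; [|split; [exact Hneq|]].
  - intros n s. unfold Fs. pose proof (HF s) as H.
    destruct (eqb3 n (proj1_sig s)) eqn:Eb.
    + apply eqb3_true in Eb. rewrite Eb. unfold tn. split; [lia|].
      intros _. exact (vn_ok q F n Hinf HF).
    + exact H.
  - assert (Hz : forall n, zeta q F (Fs q F n) = phiQ q (tn n)).
    { intros n. unfold zeta.
      set (P := fun m => exists s : SQ q, phiQ q (proj1_sig s) = m /\ F s <> Fs q F n s).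
      assert (HP : forall m, P m -> m = phiQ q (tn n)).
      { intros m [s [Hs Hd]]. unfold Fs in Hd. destruct (eqb3 n (proj1_sig s)) eqn:Eb.
        - apply eqb3_true in Eb. rewrite <- Hs, Eb. reflexivity.
        - congruence. }
      destruct (least_spec P) as [H1 _].
      { exists (phiQ q (tn n)). exists (sn q n). split; [reflexivity|].
        intro E. apply (Hneq n). apply functional_extensionality. intro s.
        unfold Fs. destruct (eqb3 n (proj1_sig s)) eqn:Eb; [|reflexivity].
        apply eqb3_true in Eb. unfold Fs in E. simpl in E.
        rewrite !Nat.eqb_refl in E. simpl in E. rewrite <- E.
        f_equal. destruct s as [t Ht]. simpl in Eb. subst t. unfold sn. f_equal.
        apply proof_irrelevance. }
      apply HP. exact H1. }
    intros eps Heps.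
    destruct (archimed (/ eps)) as [Har _].
    destruct (Z.to_nat (up (/ eps))) eqn:EN.
    { exists 0%nat. intros n _. exfalso.
      assert (up (/eps) <= 0)%Z by lia.
      apply IZR_le in H. pose proof (Rinv_0_lt_compat eps Heps). lra. }
    exists (S n). intros m Hm. unfold dQ, R_dist.
    destruct excluded_middle_informative as [E|E].
    { exfalso. apply (Hneq m). symmetry. exact E. }
    rewrite Hz. unfold tn, phiQ. replace (m+2-1)%nat with (S m) by lia.
    set (k := (Lsum q (S m) + (1-1)*(m+2) + 2 - 1)%nat).
    assert (Hk : (S m <= k)%nat) by (pose proof (Lsum_ge q (S m)); unfold k; lia).
    pose proof (prodq_ge q k Hbasic) as Hp.
    assert (Hpm : (S (S n) <= prodq q k)%nat) by lia.
    apply le_INR in Hpm.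
    assert (Hup : / eps < INR (S (S n))).
    { assert (IZR (up (/eps)) = INR (S n)).
      { rewrite <- EN. rewrite INR_IZR_INZ. f_equal. rewrite Z2Nat.id; [reflexivity|].
        lia. }
      rewrite S_INR. lra. }
    assert (0 < INR (S (S n))) by (apply lt_0_INR; lia).
    rewrite Rminus_0_r. rewrite Rabs_right.
    + unfold Rdiv. rewrite Rmult_1_l.
      apply Rle_lt_trans with (/ INR (S (S n))).
      * apply Rinv_le_contravar; lra.
      * rewrite <- (Rinv_inv eps). apply Rinv_lt_contravar; [|exact Hup].
        apply Rmult_lt_0_compat; [apply Rinv_0_lt_compat; lra| lra].
    + unfold Rdiv. rewrite Rmult_1_l. left. apply Rinv_0_lt_compat. lra.
Qed.
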